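(* Let $(G,k)$ be an instance of PITVD, let $S\subseteq V(G)$ be such that $G-S$ is a simple (prop-int, tree)-graph, and let $V_2$ be the set of vertices of the connected components of $G-S$ that are trees. If there is a vertex $v\in S$ such that $G[\{v\}\cup V_2]$ contains a $v$-flower of order $4k+3$, then every solution of size at most $k$ for $(G,k)$ contains $v$, and $(G,k)$ is a yes-instance if and only if $(G-v,k-1)$ is a yes-instance.
   Context: PITVD: the input is an undirected multigraph $G$ (no self-loops) and an integer $k$; the question is whether there exists $X\subseteq V(G)$ with $|X|\le k$ (a solution) such that $G-X$ is a simple graph and every connected component of $G-X$ is a proper interval graph or a tree. A simple graph is a (prop-int, tree)-graph if each of its connected components is a proper interval graph or a tree. A cycle is a sequence $(v_1,\dots,v_\ell,v_1)$ with $\ell\ge2$, distinct $v_i$, consecutive vertices adjacent (for $\ell=2$ this means a double edge). A $v$-flower of order $\ell$ is a family of $\ell$ cycles each containing $v$ such that any two of them intersect only in $v$. *)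

(* Defs.v *)
From HB Require Import structures.
From mathcomp Require Import all_boot all_order all_algebra.
From mathcomp Require Import boolp.
Set Implicit Arguments. Unset Strict Implicit. Unset Printing Implicit Defensive.
Import Order.TTheory GRing.Theory Num.Theory.

(* A multigraph on the finite vertex type V is given by an edge multiplicity
   function m : V -> V -> nat (assumed symmetric and loopless in the theorem).
   A graph "instance" is the submultigraph induced on a vertex set A : {set V};
   G itself is A = [set: V], and G - v is A = [set: V] :\ v. *)

Section MG.
Variable V : finType.
Variable m : V -> V -> nat.

Definition adj (u w : V) : bool := 0 < m u w.

Definition simple_on (A : {set V}) : Prop :=
  forall u w, u \in A -> w \in A -> m u w <= 1.

Definition rel_on (A : {set V}) : rel V :=
  fun x y => [&& x \in A, y \in A & adj x y].

Definition component (A : {set V}) (x : V) : {set V} :=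
  [set y | connect (rel_on A) x y].

Definition connected_on (C : {set V}) : Prop :=
  forall x y, x \in C -> y \in C -> connect (rel_on C) x y.

(* A cycle (v_1,...,v_l,v_1), l >= 2, distinct vertices, consecutive vertices
   adjacent; for l = 2 this means a double edge.  All vertices lie in A
   (so it is a cycle of G[A]). *)
Definition is_cycle (A : {set V}) (s : seq V) : bool :=
  [&& 2 <= size s, uniq s, all (fun x => x \in A) s &
      path.cycle (fun x y => if size s == 2 then 2 <= m x y else 1 <= m x y) s].

Definition tree_on (C : {set V}) : Prop :=
  C != set0 /\ connected_on C /\ forall s, ~~ is_cycle C s.

Definition prop_int_on (C : {set V}) : Prop :=
  exists l r : V -> rat,
    (forall x, x \in C -> l x <= r x)%R /\
    (forall x y, x \in C -> y \in C -> x != y ->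
       (adj x y <-> ((l x <= r y) && (l y <= r x))%R)) /\
    (forall x y, x \in C -> y \in C ->
       ~ [/\ (l x <= l y)%R, (r y <= r x)%R & (l x, r x) != (l y, r y)]).

Definition is_deletion_set (A X : {set V}) : Prop :=
  X \subset A /\ simple_on (A :\: X) /\
  forall x, x \in A :\: X ->
    prop_int_on (component (A :\: X) x) \/ tree_on (component (A :\: X) x).

(* (G[A], k) is a yes-instance of PITVD (k an integer, possibly negative) *)
Definition yes_instance (A : {set V}) (k : int) : Prop :=
  exists X : {set V}, is_deletion_set A X /\ (#|X|%:Z <= k)%R.

Definition tree_part (S : {set V}) : {set V} :=
  [set x in ~: S | `[< tree_on (component (~: S) x) >]].

Definition flower (A : {set V}) (v : V) (l : nat) : Prop :=
  exists cs : 'I_l -> seq V,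
    (forall i, is_cycle A (cs i) /\ v \in cs i) /\
    (forall i j, i != j -> forall x, x \in cs i -> x \in cs j -> x = v).

End MG.

(* Main.v *)
Require Import Defs.
From HB Require Import structures.
From mathcomp Require Import all_boot all_order all_algebra.
From mathcomp Require Import boolp zify.
Set Implicit Arguments. Unset Strict Implicit. Unset Printing Implicit Defensive.
Import Order.TTheory GRing.Theory Num.Theory.
Lemma cyc_nbrs (V : finType) (m : V -> V -> nat)
  (m_sym : forall u w, m u w = m w u) A s v :
  is_cycle m A s -> v \in s ->
  exists a b, [/\ a \in s, b \in s, a != v, b != v &
     if size s == 2 then 2 <= m v a else [&& a != b, 0 < m v a & 0 < m v b]].
Proof.
case/and4P => Hsz Hu Hall Hc Hv.
case: (rot_to Hv) => i s' Hrot.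
rewrite -(rot_cycle i) Hrot in Hc.
rewrite -(rot_uniq i) Hrot in Hu.
have Hsz' : size s = (size s').+1 by rewrite -(size_rot i) Hrot.
have Hmem : forall x, x \in s' -> x \in s.
  by move=> x Hx; rewrite -(mem_rot i) Hrot inE Hx orbT.
case: s' Hrot Hc Hu Hsz' Hmem => [|a t] Hrot Hc Hu Hsz' Hmem.
  by rewrite Hsz' in Hsz.
rewrite /= rcons_path in Hc; case/and3P: Hc => Hva _ Hbv.
case: t Hrot Hbv Hu Hsz' Hmem => [|c t] Hrot Hbv Hu Hsz' Hmem.
  exists a, a; rewrite Hsz' /= in Hva *.
  have Ha : a \in s by apply: Hmem; rewrite inE.
  split => //; by move: Hu; rewrite /= inE andbT eq_sym.
exists a, (last c t).
rewrite Hsz' /= in Hva Hbv *.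
move: Hu => /= /andP [Hv1 /andP [Ha1 _]].
have Hl : last c t \in c :: t by apply: mem_last.
split.
- by apply: Hmem; rewrite inE eqxx.
- by apply: Hmem; rewrite inE Hl orbT.
- by apply: contraNneq Hv1 => ->; rewrite inE eqxx.
- by apply: contraNneq Hv1 => <-; rewrite inE; apply/orP; right; apply: mem_last.
- apply/and3P; split => //.
  + by apply: contraNneq Ha1 => ->.
  + by rewrite m_sym.
Qed.
Lemma triangle (V : finType) (m : V -> V -> nat)
  (m_sym : forall u w, m u w = m w u) S a b c :
  a \in tree_part m S -> b \in tree_part m S -> c \in tree_part m S ->
  a != b -> b != c -> a != c ->
  adj m a b -> adj m b c -> adj m c a -> False.
Proof.
rewrite !inE => /andP [Ha /asboolP [_ [_ Hcy]]] /andP [Hb _] /andP [Hc _] nab nbc nac Hab Hbc Hca.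
apply: (negP (Hcy [:: a; b; c])).
have Hb' : b \in component m (~: S) a.
  by rewrite inE; apply: connect1; rewrite /rel_on !inE Ha Hb.
have Hc' : c \in component m (~: S) a.
  rewrite inE; apply: connect1; rewrite /rel_on !inE Ha Hc /=.
  by rewrite /adj m_sym.
have Ha' : a \in component m (~: S) a by rewrite inE connect0.
rewrite /is_cycle /= Ha' Hb' Hc' !inE negb_or nab nac nbc /=.
by rewrite /adj in Hab Hbc Hca; rewrite Hab Hbc Hca.
Qed.
Lemma pigeon5 (T : Type) (P : T -> bool) (R : T -> T -> T -> Prop) a1 a2 a3 a4 a5 :
  (forall x y z, R x y z -> P x = P y -> P y = P z -> False) ->
  R a1 a2 a3 -> R a1 a2 a4 -> R a1 a2 a5 -> R a1 a3 a4 -> R a1 a3 a5 ->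
  R a1 a4 a5 -> R a2 a3 a4 -> R a2 a3 a5 -> R a2 a4 a5 -> R a3 a4 a5 -> False.
Proof.
move=> H R1 R2 R3 R4 R5 R6 R7 R8 R9 R10.
case E1: (P a1); case E2: (P a2); case E3: (P a3); case E4: (P a4); case E5: (P a5);
first [ by apply: (H _ _ _ R1); rewrite ?E1 ?E2 ?E3 ?E4 ?E5
      | by apply: (H _ _ _ R2); rewrite ?E1 ?E2 ?E3 ?E4 ?E5
      | by apply: (H _ _ _ R3); rewrite ?E1 ?E2 ?E3 ?E4 ?E5
      | by apply: (H _ _ _ R4); rewrite ?E1 ?E2 ?E3 ?E4 ?E5
      | by apply: (H _ _ _ R5); rewrite ?E1 ?E2 ?E3 ?E4 ?E5
      | by apply: (H _ _ _ R6); rewrite ?E1 ?E2 ?E3 ?E4 ?E5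
      | by apply: (H _ _ _ R7); rewrite ?E1 ?E2 ?E3 ?E4 ?E5
      | by apply: (H _ _ _ R8); rewrite ?E1 ?E2 ?E3 ?E4 ?E5
      | by apply: (H _ _ _ R9); rewrite ?E1 ?E2 ?E3 ?E4 ?E5
      | by apply: (H _ _ _ R10); rewrite ?E1 ?E2 ?E3 ?E4 ?E5 ].
Qed.

Lemma interval_nbrs (V : finType) (m : V -> V -> nat) (C : {set V}) (l r : V -> rat) v a :
  (forall x y, x \in C -> y \in C -> x != y ->
       (adj m x y <-> ((l x <= r y) && (l y <= r x))%R)) ->
  (forall x y, x \in C -> y \in C ->
       ~ [/\ (l x <= l y)%R, (r y <= r x)%R & (l x, r x) != (l y, r y)]) ->
  v \in C -> a \in C -> a != v -> adj m v a ->
  ((l a <= l v)%R -> ((l a <= l v) && (l v <= r a))%R) /\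
  (~~ (l a <= l v)%R -> ((l a <= r v) && (r v <= r a))%R).
Proof.
move=> H2 H3 vC aC nav Hva.
have := (H2 v a vC aC); rewrite eq_sym nav => /(_ isT) [/(_ Hva) /andP [h1 h2] _].
split => h3; first by rewrite h3 h1.
rewrite -ltNge in h3; rewrite h2 /=.
case: (leP (r a) (r v)) => h4; last exact: ltW.
exfalso; apply: (H3 v a vC aC); split => //; first exact: ltW.
by apply: contraTneq h3 => [[->]]; rewrite ltxx.
Qed.

Lemma clique_pt (V : finType) (m : V -> V -> nat) (C : {set V}) (l r : V -> rat) p x y :
  (forall x y, x \in C -> y \in C -> x != y ->
       (adj m x y <-> ((l x <= r y) && (l y <= r x))%R)) ->
  x \in C -> y \in C -> x != y ->
  ((l x <= p) && (p <= r x))%R -> ((l y <= p) && (p <= r y))%R -> adj m x y.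
Proof.
move=> H2 xC yC nxy /andP [h1 h2] /andP [h3 h4].
apply/(H2 x y xC yC nxy); apply/andP; split; [exact: le_trans h1 h4 | exact: le_trans h3 h2].
Qed.
Lemma pick3 (T : finType) (A : {set T}) : 3 <= #|A| ->
  exists i j l, [/\ i \in A, j \in A, l \in A & [/\ i != j, j != l & i != l]].
Proof.
move=> H.
have /card_gt0P [i Hi] : 0 < #|A| by apply: leq_trans H.
have H1 : 2 <= #|A :\ i| by move: H; rewrite (cardsD1 i A) Hi.
have /card_gt0P [j Hj] : 0 < #|A :\ i| by apply: leq_trans H1.
have H2 : 1 <= #|A :\ i :\ j| by move: H1; rewrite (cardsD1 j (A :\ i)) Hj.
have /card_gt0P [l Hl] : 0 < #|A :\ i :\ j| by [].
move: Hj Hl; rewrite !inE => /andP [nji jA] /and3P [nlj nli lA].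
by exists i, j, l; split => //; split => //; rewrite eq_sym.
Qed.

Lemma three_good (V : finType) n (cs : 'I_n -> seq V) (X : {set V}) v :
  v \notin X ->
  (forall i j, i != j -> forall x, x \in cs i -> x \in cs j -> x = v) ->
  #|X| + 3 <= n ->
  exists i j l, [/\ [/\ i != j, j != l & i != l],
     (forall x, x \in cs i -> x \notin X),
     (forall x, x \in cs j -> x \notin X) &
     (forall x, x \in cs l -> x \notin X)].
Proof.
move=> vX Hd Hn.
pose B := [set i | has (mem X) (cs i)].
pose f i := nth v (cs i) (find (mem X) (cs i)).
have fX : forall i, i \in B -> f i \in X.
  by move=> i; rewrite inE => Hi; apply: (nth_find v Hi).
have fC : forall i, i \in B -> f i \in cs i.
  by move=> i; rewrite inE => Hi; apply: mem_nth; rewrite -has_find.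
have Hinj : {in B &, injective f}.
  move=> i j Hi Hj Hf; apply/eqP; apply: contraT => nij.
  have := Hd i j nij (f i) (fC i Hi); rewrite Hf => /(_ (fC j Hj)) Hv.
  by move: (fX j Hj); rewrite Hv (negbTE vX).
have HB : #|B| <= #|X|.
  rewrite -(card_in_imset Hinj); apply: subset_leq_card.
  by apply/subsetP => y /imsetP [i Hi ->]; apply: fX.
have HC : 3 <= #|~: B|.
  rewrite cardsCs card_ord setCK.
  have := cardsC B; rewrite card_ord; lia.
case: (pick3 HC) => i [j [l [Hi Hj Hl Hne]]].
exists i, j, l; split => //.
- move=> x Hx; apply/negP => xX; move: Hi; rewrite !inE => /negP; apply; apply/hasP; by exists x.
- move=> x Hx; apply/negP => xX; move: Hj; rewrite !inE => /negP; apply; apply/hasP; by exists x.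
- move=> x Hx; apply/negP => xX; move: Hl; rewrite !inE => /negP; apply; apply/hasP; by exists x.
Qed.

Lemma part1 (V : finType) (m : V -> V -> nat)
  (m_sym : forall u w, m u w = m w u) (m_loopless : forall u, m u u = 0%N)
  (k : nat) (S : {set V}) (v : V) :
  is_deletion_set m [set: V] S ->
  v \in S ->
  flower m (v |: tree_part m S) v (4 * k + 3) ->
  (forall X : {set V}, is_deletion_set m [set: V] X -> #|X| <= k -> v \in X).
Proof.
move=> HS vS [cs [Hcyc Hdisj]] X [_ [Hsimp Hcomp]] HXk.
apply: contraT => vX.
have [i [j [l [[nij njl nil] Gi Gj Gl]]]] :
  exists i j l, [/\ [/\ i != j, j != l & i != l],
     (forall x, x \in cs i -> x \notin X),
     (forall x, x \in cs j -> x \notin X) &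
     (forall x, x \in cs l -> x \notin X)].
  have Hn : #|X| + 3 <= 4 * k + 3 by lia.
  exact: (three_good vX Hdisj Hn).
set B := [set: V] :\: X.
set C := component m B v.
have vB : v \in B by rewrite !inE andbT.
have good : forall c, (forall x, x \in cs c -> x \notin X) ->
  is_cycle m C (cs c) /\
  exists a b, [/\ [/\ a \in C, b \in C, a != v, b != v & a != b],
                  [/\ adj m v a, adj m v b, a \in tree_part m S & b \in tree_part m S] &
                  a \in cs c /\ b \in cs c].
  move=> c Gc.
  have [Hc vc] := Hcyc c.
  have csB : all (fun x => x \in B) (cs c).
    by apply/allP => x Hx; rewrite !inE Gc.
  have Hcon : forall x, x \in cs c -> x \in C.
    move=> x Hx; rewrite inE; apply: (connect_cycle _ vc Hx).
    case/and4P: Hc => _ _ _ Hc.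
    apply: (sub_in_cycle _ csB Hc) => y z yB zB /=.
    rewrite /rel_on yB zB /adj /=.
    by case: ifP => _ h; apply: leq_trans h.
  have [a [b [aS bS nav nbv Hsz]]] := cyc_nbrs m_sym Hc vc.
  have hT : forall x, x \in cs c -> x != v -> x \in tree_part m S.
    move=> x Hx nxv; case/and4P: Hc => _ _ /allP /(_ x Hx) + _.
    by rewrite !inE (negbTE nxv).
  case: ifP Hsz => _ Hsz.
    exfalso; have := Hsimp v a vB; rewrite !inE Gc // => /(_ isT).
    by rewrite leqNgt (leq_trans _ Hsz).
  case/and3P: Hsz => nab hva hvb.
  split.
    case/and4P: Hc => h1 h2 _ h4; apply/and4P; split => //.
    by apply/allP.
  exists a, b; split => //; split => //; by [apply: Hcon | apply: hT].
case: (Hcomp v vB) => [[lf [rg [H1 [H2 H3]]]] | [_ [_ Htr]]]; last first.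
  by have [Hc _] := good i Gi; move: (Htr (cs i)); rewrite Hc.
have [_ [a1 [b1 [[a1C b1C na1 nb1 nab1] [ha1 hb1 ta1 tb1] [ia1 ib1]]]]] := good i Gi.
have [_ [a2 [b2 [[a2C b2C na2 nb2 nab2] [ha2 hb2 ta2 tb2] [ja2 jb2]]]]] := good j Gj.
have [_ [a3 [b3 [[a3C b3C na3 nb3 nab3] [ha3 hb3 ta3 tb3] [la3 lb3]]]]] := good l Gl.
have vC : v \in C by rewrite inE connect0.
have dif : forall c d x y, c != d -> x \in cs c -> y \in cs d -> x != v -> x != y.
  move=> c d x y ncd hx hy nxv; apply: contraNneq nxv => exy.
  by apply/eqP; apply: (Hdisj c d ncd x hx); rewrite exy.
pose Q x := [/\ x \in C, x != v, adj m v x & x \in tree_part m S].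
pose R x y z := [/\ [/\ x != y, y != z & x != z], Q x, Q y & Q z].
suff: False by []. apply: (@pigeon5 _ (fun x => (lf x <= lf v)%R) R a1 b1 a2 b2 a3).
- move=> x y z [[nxy nyz nxz] [xC xv hx tx] [yC yv hy ty] [zC zv hz tz]] /= Exy Eyz.
  have Ix := interval_nbrs H2 H3 vC xC xv hx.
  have Iy := interval_nbrs H2 H3 vC yC yv hy.
  have Iz := interval_nbrs H2 H3 vC zC zv hz.
  have nzx : z != x by rewrite eq_sym.
  case: (boolP (lf x <= lf v)%R) => E.
  + have Ey : (lf y <= lf v)%R by rewrite -Exy.
    have Ez : (lf z <= lf v)%R by rewrite -Eyz -Exy.
    move: (Ix.1 E) (Iy.1 Ey) (Iz.1 Ez) => {}Ix {}Iy {}Iz.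
    apply: (triangle m_sym tx ty tz nxy nyz nxz);
    by [apply: (clique_pt H2 _ _ _ Ix Iy) | apply: (clique_pt H2 _ _ _ Iy Iz)
       | apply: (clique_pt H2 _ _ _ Iz Ix)].
  + have Ey : ~~ (lf y <= lf v)%R by rewrite -Exy.
    have Ez : ~~ (lf z <= lf v)%R by rewrite -Eyz -Exy.
    move: (Ix.2 E) (Iy.2 Ey) (Iz.2 Ez) => {}Ix {}Iy {}Iz.
    apply: (triangle m_sym tx ty tz nxy nyz nxz);
    by [apply: (clique_pt H2 _ _ _ Ix Iy) | apply: (clique_pt H2 _ _ _ Iy Iz)
       | apply: (clique_pt H2 _ _ _ Iz Ix)].
all: split; [split | by split | by split | by split].
all: try done.
all: try (by apply: (dif _ _ _ _ nij)).
all: try (by apply: (dif _ _ _ _ nil)).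
all: try (by apply: (dif _ _ _ _ njl)).
Qed.

Theorem lemma23 (V : finType) (m : V -> V -> nat)
  (m_sym : forall u w, m u w = m w u) (m_loopless : forall u, m u u = 0%N)
  (k : nat) (S : {set V}) (v : V) :
  is_deletion_set m [set: V] S ->
  v \in S ->
  flower m (v |: tree_part m S) v (4 * k + 3) ->
  (forall X : {set V}, is_deletion_set m [set: V] X -> #|X| <= k -> v \in X) /\
  (yes_instance m [set: V] k%:Z <-> yes_instance m ([set: V] :\ v) (k%:Z - 1)%R).
Proof.
move=> HS vS Hfl.
have P1 := part1 m_sym m_loopless HS vS Hfl.
split => //; split.
- move=> [X [HX HXk]].
  have HXk' : #|X| <= k by rewrite -lez_nat.
  have vX := P1 X HX HXk'.
  exists (X :\ v); case: HX => [_ [Hsimp Hcomp]].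
  have Heq : [set: V] :\ v :\: (X :\ v) = [set: V] :\: X.
    apply/setP => x; rewrite !inE; case: eqP => [->|] //=; by rewrite vX.
  split; first split.
  + by apply/subsetP => x; rewrite !inE andbT => /andP [].
  + by rewrite Heq.
  + have := cardsD1 v X; rewrite vX => Hc.
    move: HXk; rewrite Hc; lia.
- move=> [Y [[HYs [Hsimp Hcomp]] HYk]].
  have vY : v \notin Y by apply/negP => /(subsetP HYs); rewrite !inE eqxx.
  exists (v |: Y).
  have Heq : [set: V] :\: (v |: Y) = [set: V] :\ v :\: Y.
    by apply/setP => x; rewrite !inE negb_or !andbT andbC.
  split; first split.
  + exact: subsetT.
  + by rewrite Heq.
  + have := cardsU1 v Y; rewrite vY => Hc.
    rewrite Hc; move: HYk; lia.
Qed.
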